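(* Let $d\ge1$. For any $\nu>0$ and any $M\ge\big[-d\cdot W_{-1}\big(-\nu^{2/d}/(2\pi e)\big)\big]^{1/2}$, it holds that \[\int_{\{u\in\mathbb{R}^d:\ \|u\|\ge M\}}e^{-\|u\|^2/2}\,du\le\nu.\]
   Context: $W_{-1}$ denotes the negative real branch of the Lambert $W$ function, i.e., the inverse of $t\mapsto te^t$ restricted to $(-\infty,-1]$, mapping $[-1/e,0)$ onto $(-\infty,-1]$; by convention $W_{-1}(t)=0$ if $t<-1/e$. $\|\cdot\|$ is the Euclidean norm. *)

(* Defs.v *)
From HB Require Import structures.
From mathcomp Require Import all_boot all_order all_algebra.
From mathcomp Require Import all_classical all_reals all_analysis.
Set Implicit Arguments. Unset Strict Implicit. Unset Printing Implicit Defensive.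
Import Order.TTheory GRing.Theory Num.Theory.
Local Open Scope classical_set_scope.
Local Open Scope ring_scope.

(* Negative real branch of the Lambert W function: for t in [-1/e,0) the
   unique w <= -1 with w e^w = t; by convention 0 otherwise (for t >= 0 and
   t < -1/e no such w exists, and it is unique when it exists). *)
Definition lambertWm1 {R : realType} (t : R) : R :=
  xget 0 [set w : R | w <= -1 /\ w * expR w = t].

Definition eucl_norm {R : realType} {d : nat} (u : d.-tuple R) : R :=
  Num.sqrt (\sum_(i < d) (tnth u i) ^+ 2).

(* Integral over R^d (w.r.t. d-dimensional Lebesgue measure) of a
   nonnegative function, as the iterated Lebesgue integral
   (equal to the product-measure integral by Tonelli). *)
Fixpoint integral_Rn {R : realType} (d : nat) : (d.-tuple R -> \bar R) -> \bar R :=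
  match d with
  | 0 => fun f => f [tuple]
  | n.+1 => fun f =>
      (\int[@lebesgue_measure R]_(x in [set: R])
         integral_Rn (fun t : n.-tuple R => f [tuple of x :: t]))%E
  end.

(* Main.v *)
Require Import Defs.
From HB Require Import structures.
From mathcomp Require Import all_boot all_order all_algebra.
From mathcomp Require Import all_classical all_reals all_analysis.
From mathcomp Require Import ring lra measurable_realfun normal_distribution.
Import Order.TTheory GRing.Theory Num.Theory.
Import numFieldNormedType.Exports.
Local Open Scope classical_set_scope.
Local Open Scope ring_scope.

Lemma le_int_nm d (T : measurableType d) (R : realType) (mu : {measure set T -> \bar R}) (f g : T -> \bar R) :
  (forall x, (0 <= f x)%E) -> (forall x, (f x <= g x)%E) ->
  (\int[mu]_x f x <= \int[mu]_x g x)%E.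
Proof.
move=> f0 fg.
have g0 : forall x, (0 <= g x)%E by move=> x; exact: le_trans (f0 x) (fg x).
rewrite !ge0_integralTE//.
apply: le_ereal_sup => _ [h hf <-]; exists h => //= x; exact: le_trans (hf x) (fg x).
Qed.

Lemma integral_Rn_ge0 (R : realType) (d : nat) (f : d.-tuple R -> \bar R) :
  (forall u, (0 <= f u)%E) -> (0 <= integral_Rn f)%E.
Proof.
elim: d f => [|n IH] f f0 /=; first exact: f0.
by apply: integral_ge0 => x _; apply: IH => t; exact: f0.
Qed.

Lemma integral_Rn_le (R : realType) (d : nat) (f g : d.-tuple R -> \bar R) :
  (forall u, (0 <= f u)%E) -> (forall u, (f u <= g u)%E) ->
  (integral_Rn f <= integral_Rn g)%E.
Proof.
elim: d f g => [|n IH] f g f0 fg /=; first exact: fg.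
apply: le_int_nm => x; first by apply: integral_Rn_ge0 => t; exact: f0.
by apply: IH => t; [exact: f0 | exact: fg].
Qed.

Lemma integral_Rn_prod (R : realType) (g : R -> R) (I : R) :
  measurable_fun setT g -> (forall x, 0 <= g x) ->
  (\int[lebesgue_measure]_x (g x)%:E = I%:E)%E ->
  forall d (c : R), 0 <= c ->
  integral_Rn (fun u : d.-tuple R => (c * \prod_(i < d) g (tnth u i))%:E) = (c * I ^+ d)%:E.
Proof.
move=> mg g0 gI.
have I0 : 0 <= I by rewrite -lee_fin -gI; apply: integral_ge0 => x _; rewrite lee_fin.
elim=> [|n IH] c c0 /=; first by rewrite big_ord0 expr0.
transitivity (\int[lebesgue_measure]_(x in [set: R]) ((c * I ^+ n)%:E * (g x)%:E))%E.
  apply: eq_integral => x _.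
  rewrite -EFinM (_ : c * I ^+ n * g x = (c * g x) * I ^+ n); last by ring.
  rewrite -IH ?mulr_ge0//; congr integral_Rn; apply: funext => t.
  by rewrite big_ord_recl tnth0; under eq_bigr do rewrite tnthS; rewrite mulrA.
rewrite ge0_integralZl//.
- by rewrite (_ : \int[_]_x _ = I%:E)%E ?gI// -EFinM exprS; congr EFin; ring.
- by apply/measurable_EFinP.
- by move=> x _; rewrite lee_fin.
- by rewrite lee_fin mulr_ge0// exprn_ge0.
Qed.

Lemma gauss_int (R : realType) (s : R) : 0 < s ->
  (\int[lebesgue_measure]_x (normal_fun 0 s x)%:E)%E = (Num.sqrt (s ^+ 2 * pi *+ 2))%:E.
Proof.
move=> s0.
have sn0 : s != 0 by rewrite gt_eqF.
have pk := normal_peak_gt0 sn0.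
transitivity (\int[lebesgue_measure]_x ((normal_peak s)^-1%:E * (normal_pdf 0 s x)%:E))%E.
  apply: eq_integral => x _; rewrite normal_pdfE// /= -EFinM mulrA mulVf ?mul1r//.
  by rewrite gt_eqF.
rewrite ge0_integralZl//.
- by rewrite integral_normal_pdf mule1 /normal_peak invrK.
- by apply/measurable_EFinP; exact: measurable_normal_pdf.
- by move=> x _; rewrite lee_fin normal_pdf_ge0.
- by rewrite lee_fin invr_ge0 ltW.
Qed.

Lemma main_bound (R : realType) (d : nat) (M s : R) : 0 <= M -> 1 <= s ->
 (integral_Rn (fun u : d.-tuple R =>
     (if M <= eucl_norm u then expR (- (eucl_norm u ^+ 2) / 2) else 0)%:E)
  <= (expR (- ((1 - s ^-2) / 2 * M ^+ 2)) * Num.sqrt (s ^+ 2 * pi *+ 2) ^+ d)%:E)%E.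
Proof.
move=> M0 s1.
have s0 : 0 < s by exact: lt_le_trans ltr01 s1.
rewrite -(@integral_Rn_prod R (normal_fun 0 s)); last 4 first.
- exact: measurable_normal_fun.
- by move=> x; exact: normal_fun_ge0.
- exact: gauss_int.
- exact: expR_ge0.
apply: integral_Rn_le => u; first by case: ifP => _; rewrite lee_fin ?expR_ge0.
set N := eucl_norm u.
have N0 : 0 <= N by rewrite /N /eucl_norm sqrtr_ge0.
have hN : \prod_(i < d) normal_fun 0 s (tnth u i) = expR (- (N ^+ 2) / (s ^+ 2 *+ 2)).
  rewrite /normal_fun -expR_sum; congr expR.
  rewrite /N /eucl_norm sqr_sqrtr; last by apply: sumr_ge0 => i _; exact: sqr_ge0.
  rewrite -sumrN mulr_suml; apply: eq_bigr => i _; by rewrite subr0.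
rewrite hN -expRD.
case: ifP => hMN; last by rewrite lee_fin expR_ge0.
rewrite lee_fin ler_expR.
set t := s ^-2.
have t0 : 0 <= t by rewrite /t invr_ge0 exprn_ge0 // ltW.
have s2 : 1 <= s ^+ 2 by rewrite expr2; nra.
have t1 : t <= 1 by rewrite /t invf_le1 // (lt_le_trans ltr01 s2).
have e : (s ^+ 2 *+ 2)^-1 = t / 2 by rewrite /t -mulr_natr invfM.
have MN : M ^+ 2 <= N ^+ 2 by rewrite !expr2; nra.
rewrite e.
have h1 : 0 <= 1 - t by lra.
have h2 : 0 <= N ^+ 2 - M ^+ 2 by lra.
have := mulr_ge0 h1 h2.
nra.
Qed.

Lemma sqrtXn_exp (R : realType) (z : R) (d : nat) : 0 < z ->
  Num.sqrt z ^+ d = expR (d%:R / 2 * ln z).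
Proof.
move=> z0; have sz : 0 < Num.sqrt z by rewrite sqrtr_gt0.
rewrite -[LHS]lnK ?posrE ?exprn_gt0//. 
congr expR.
have -> : ln z = ln (Num.sqrt z) *+ 2 by rewrite -lnXn// (sqr_sqrtr (ltW z0)).
rewrite lnXn// -[ln (Num.sqrt z) *+ d]mulr_natr -[ln (Num.sqrt z) *+ 2]mulr_natr; by field.
Qed.

Lemma ln_le_sub1 (R : realType) (x : R) : 0 < x -> ln x <= x - 1.
Proof.
move=> x0; have := expR_ge1Dx (ln x); rewrite lnK ?posrE//; lra.
Qed.

Lemma no_sol (R : realType) (k : R) : 0 < k -> k < expR (-1) ->
  exists w : R, w <= -1 /\ w * expR w = - k.
Proof.
move=> k0 ke.
set s0 := Num.max 1 (4 / k).
have s01 : 1 <= s0 by rewrite /s0 le_max lexx.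
have s04 : 4 / k <= s0 by rewrite /s0 le_max lexx orbT.
have ks : 4 <= k * s0.
  by rewrite -(ler_pM2l k0) in s04; move: s04; rewrite mulrCA divff ?gt_eqF// mulr1.
have eh := expR_ge1Dx (s0 / 2).
have es : expR s0 = expR (s0 / 2) * expR (s0 / 2) by rewrite -expRD; congr expR; field.
have fa : - k <= - s0 * expR (- s0).
  rewrite expRN mulNr lerN2 ler_pdivrMr ?expR_gt0//.
  have h1 : (1 + s0 / 2) * (1 + s0 / 2) <= expR s0 by rewrite es; apply: ler_pM => //; lra.
  have h2 : s0 * s0 / 4 <= (1 + s0 / 2) * (1 + s0 / 2).
    have -> : (1 + s0 / 2) * (1 + s0 / 2) = s0 * s0 / 4 + (1 + s0) by field.
    lra.
  have h3 : k * (s0 * s0 / 4) <= k * expR s0.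
    by apply: ler_wpM2l; [exact: ltW | exact: le_trans h2 h1].
  apply: le_trans h3.
  have -> : k * (s0 * s0 / 4) = (k * s0) * (s0 / 4) by field.
  have : 4 * (s0 / 4) <= (k * s0) * (s0 / 4) by apply: ler_wpM2r => //; lra.
  lra.
have f1 : - 1 * expR (- 1) <= - k by rewrite mulN1r lerN2 ltW.
have cf : continuous (fun w : R => w * expR w).
  by move=> x; apply: continuousM; [exact: cvg_id | exact: continuous_expR].
have := @IVT R (fun w => w * expR w) (- s0) (- 1) (- k).
case.
- by rewrite lerN2.
- exact: continuous_subspaceT.
- by rewrite ge_min le_max f1 fa orbT.
move=> c; rewrite in_itv /= => /andP[_ c1] hc; by exists c.
Qed.


Theorem lemma3p6 (R : realType) (d : nat) (hd : (1 <= d)%N) (nu M : R)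
  (hnu : 0 < nu)
  (hM : Num.sqrt (- (d%:R * lambertWm1 (- (nu `^ (2 / d%:R)) / (2 * pi * expR 1)))) <= M) :
  (integral_Rn (fun u : d.-tuple R =>
     (if M <= eucl_norm u then expR (- (eucl_norm u ^+ 2) / 2) else 0)%:E)
   <= nu%:E)%E.
Proof.
set P := nu `^ (2 / d%:R) in hM.
set K := 2 * pi * expR 1 in hM.
have P0 : 0 < P by apply: powR_gt0.
have dpos : 0 < d%:R :> R by rewrite ltr0n.
have pi0 := pi_gt0 R.
have K0 : 0 < K by rewrite /K !mulr_gt0 ?expR_gt0.
have lnnu : ln nu = d%:R / 2 * ln P.
  by rewrite /P ln_powR; field; rewrite gt_eqF.
have M0 : 0 <= M := le_trans (sqrtr_ge0 _) hM.
have fin : forall a z, 0 < z -> a + d%:R / 2 * ln z <= ln nu ->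
    ((expR a * Num.sqrt z ^+ d)%:E <= nu%:E)%E.
  move=> a z z0 h; rewrite lee_fin sqrtXn_exp// -expRD.
  by rewrite -(lnK (x := nu)) ?posrE// ler_expR.
have [[w [w1 we]] | nW] := pselect (exists w : R, w <= -1 /\ w * expR w = - P / K).
- have [W1 WE] : lambertWm1 (- P / K) <= -1 /\
      lambertWm1 (- P / K) * expR (lambertWm1 (- P / K)) = - P / K.
    exact: (@xgetPex R 0 [set w : R | w <= -1 /\ w * expR w = - P / K] (ex_intro _ w (conj w1 we))).
  move: hM W1 WE; set W := lambertWm1 _ => hM W1 WE.
  set m := - W.
  have m1 : 1 <= m by rewrite /m; lra.
  have m0 : 0 < m by lra.
  have dm : d%:R * m <= M ^+ 2.
    have := ler_pM (sqrtr_ge0 _) (sqrtr_ge0 _) hM hM.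
    rewrite -expr2 sqr_sqrtr ?expr2 //; first by rewrite /m mulrN.
    by rewrite /m -mulrN mulr_ge0// ltW.
  set y := M ^+ 2 / d%:R.
  have My : M ^+ 2 = d%:R * y by rewrite /y; field; rewrite gt_eqF.
  have ym : m <= y by rewrite /y ler_pdivlMr// mulrC.
  have y0 : 0 < y by lra.
  have s1 : 1 <= Num.sqrt y by rewrite -(sqrtr1 R) ler_sqrt; lra.
  apply: le_trans (@main_bound R d M _ M0 s1) _.
  rewrite sqr_sqrtr; last by lra.
  apply: fin; first by rewrite pmulrn_lgt0// mulr_gt0.
  have p2 : 0 < pi *+ 2 :> R by rewrite pmulrn_lgt0.
  have lnP : ln P = ln m - m + ln (pi *+ 2) + 1.
    have -> : P = (m * expR (- m)) * (pi *+ 2) * expR 1.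
      have hWK : W * expR W * K = - P by rewrite WE divfK ?gt_eqF.
      apply: oppr_inj; rewrite -hWK /m opprK /K -mulr_natr; ring.
    have e0 : 0 < expR (- m) by exact: expR_gt0.
    have e1 : 0 < expR 1 :> R by exact: expR_gt0.
    rewrite lnM ?posrE ?mulr_gt0// lnM ?posrE ?mulr_gt0// lnM ?posrE// !expRK; lra.
  have lny : ln (y * pi *+ 2) = ln y + ln (pi *+ 2).
    by rewrite -mulrnAr lnM ?posrE.
  rewrite lnnu lnP lny My.
  have key : ln y - y <= ln m - m.
    have h := @ln_le_sub1 R _ (divr_gt0 y0 m0).
    rewrite ln_div ?posrE// in h.
    have h2 : y / m <= y - m + 1.
      rewrite ler_pdivrMr//.
      have a1 : 0 <= y - m by lra.
      have a2 : 0 <= m - 1 by lra.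
      have := mulr_ge0 a1 a2.
      nra.
    lra.
  have e1 : (1 - y^-1) / 2 * (d%:R * y) = d%:R / 2 * (y - 1).
    by field; rewrite gt_eqF.
  rewrite e1.
  have d2 : 0 <= d%:R / 2 :> R by lra.
  have := ler_wpM2l d2 key.
  nra.
- have W0 : lambertWm1 (- P / K) = 0.
    rewrite /lambertWm1; apply: xgetPN => x /= hx; apply: nW; by exists x.
  have P2 : pi *+ 2 <= P.
    rewrite leNgt; apply/negP => hP.
    apply: nW.
    have k0 : 0 < P / K by rewrite divr_gt0.
    have : P / K < expR (-1).
      have eK : expR (-1) * K = pi *+ 2.
        have e1 : expR 1 != 0 :> R by rewrite gt_eqF ?expR_gt0.
        by rewrite /K expRN -mulr_natr; field.
      by rewrite ltr_pdivrMr// eK.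
    move=> /(@no_sol R _ k0) [c [c1 hc]]; exists c; split => //; by rewrite hc mulNr.
  have s1 : 1 <= 1 :> R by [].
  apply: le_trans (@main_bound R d M _ M0 s1) _.
  rewrite expr1n invr1 subrr mul0r mul0r oppr0 mul1r.
  apply: fin; first by rewrite pmulrn_lgt0.
  rewrite add0r lnnu; apply: ler_wpM2l; first lra.
  have p2 : 0 < pi *+ 2 :> R by rewrite pmulrn_lgt0.
  by rewrite ler_ln ?posrE.
Qed.
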